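(* Let $A$ be a uniform algebra on a compact space $X$, let $x_0\in X$, and let $\phi$ be a selfmap of $X$ which induces an endomorphism $T$ of $A$ (i.e. $f\circ\phi\in A$ and $Tf=f\circ\phi$ for all $f\in A$). Let $\phi_n$ be the $n$-th iterate of $\phi$ and set $C_n=\sup\{\|\phi_n(x)-x_0\|: x\in X\}$. If $C_n^{1/n}\to0$ as $n\to\infty$, then $T$ is a Riesz operator.
   Context: A uniform algebra on a compact space $X$ is a closed subalgebra of $C(X)$, with the supremum norm, containing the constants and separating points. For $x,y\in X$, the norm (Gleason) distance is $\|x-y\|=\sup\{|f(x)-f(y)|: f\in A,\ \|f\|_\infty\le1\}$, i.e. the norm in $A^*$ of the difference of the evaluation functionals. A bounded operator $T$ is a Riesz operator if $\lim_{n}\left[\inf\{\|T^n-K\|:K \text{ compact}\}\right]^{1/n}=0$. *)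

(* Defs.v *)
From HB Require Import structures.
From mathcomp Require Import all_boot all_order all_algebra.
From mathcomp Require Import all_classical all_reals all_analysis.
From mathcomp Require Import complex.

Set Implicit Arguments.
Unset Strict Implicit.
Unset Printing Implicit Defensive.

Import Order.TTheory GRing.Theory Num.Theory numFieldNormedType.Exports.
Local Open Scope classical_set_scope.
Local Open Scope ring_scope.

Section UniformAlgebras.
Variables (R : realType) (X : topologicalType).
Local Notation C := (R[i]).
Local Notation fn := (X -> C).

Definition cabs (z : C) : R := ComplexField.Normc.normc z.

Definition supn (f : fn) : R := sup (range (fun x => cabs (f x))).

(* continuity of a complex-valued function (C = R^2 with product topology) *)
Definition ccontinuous (f : fn) : Prop :=
  continuous (fun x => complex.Re (f x)) /\ continuous (fun x => complex.Im (f x)).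

Definition unif_lim (u : nat -> fn) (g : fn) : Prop :=
  forall e : R, 0 < e -> exists N : nat, forall n, (N <= n)%N ->
    forall x, cabs (u n x - g x) < e.

Definition uniform_algebra (A : set fn) : Prop :=
  (forall f, A f -> ccontinuous f) /\
  (forall c : C, A (fun _ => c)) /\
  (forall f g, A f -> A g -> A (fun x => f x + g x)) /\
  (forall f g, A f -> A g -> A (fun x => f x * g x)) /\
  (forall (c : C) f, A f -> A (fun x => c * f x)) /\
  (forall (u : nat -> fn) g, (forall n, A (u n)) -> unif_lim u g -> A g) /\
  (forall x y : X, x <> y -> exists f, A f /\ f x <> f y).

Definition ball1 (A : set fn) : set fn := [set f | A f /\ supn f <= 1].

(* Gleason (norm) distance ||x - y|| in A^* *)
Definition gdist (A : set fn) (x y : X) : R :=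
  sup [set cabs (f x - f y) | f in ball1 A].

Definition op_on (A : set fn) (S : fn -> fn) : Prop :=
  (forall f, A f -> A (S f)) /\
  (forall (c : C) f g, A f -> A g ->
     S (fun x => c * f x + g x) = (fun x => c * S f x + S g x)).

Definition op_norm (A : set fn) (S : fn -> fn) : R :=
  sup [set supn (S f) | f in ball1 A].

Definition compact_op (A : set fn) (K : fn -> fn) : Prop :=
  op_on A K /\
  forall u : nat -> fn, (forall n, ball1 A (u n)) ->
    exists (s : nat -> nat) (g : fn),
      (forall n, (s n < s n.+1)%N) /\ A g /\ unif_lim (fun n => K (u (s n))) g.

Definition ess_norm (A : set fn) (S : fn -> fn) : R :=
  inf [set op_norm A (fun f x => S f x - K f x) | K in compact_op A].

Definition riesz_op (A : set fn) (S : fn -> fn) : Prop :=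
  (fun n : nat => ess_norm A (iter n S) `^ (n%:R^-1)) @ \oo --> (0 : R).

End UniformAlgebras.

(* Main.v *)
Require Import Defs.
From HB Require Import structures.
From mathcomp Require Import all_boot all_order all_algebra.
From mathcomp Require Import all_classical all_reals all_analysis.
From mathcomp Require Import complex lra.
Import Order.TTheory GRing.Theory Num.Theory numFieldNormedType.Exports.
Local Open Scope classical_set_scope.
Local Open Scope ring_scope.
Set Implicit Arguments. Unset Strict Implicit.

Section Gen.
Variable R : realType.
Implicit Types E : set R.

Lemma sup_ge0' E : (forall e, E e -> 0 <= e) -> 0 <= sup E.
Proof.
move=> H.
have [ub|nub] := pselect (has_ubound E); last by rewrite sup_out // => -[].
have [[e Ee]|ne] := pselect (E !=set0).
  exact: le_trans (H e Ee) (ub_le_sup ub Ee).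
have -> : E = set0 by apply/seteqP; split => x // Ex; apply: ne; exists x.
by rewrite sup0.
Qed.

Lemma sup_le' E c : 0 <= c -> (forall e, E e -> e <= c) -> sup E <= c.
Proof.
move=> c0 H.
have [ne|ne] := pselect (E !=set0); first by apply: ge_sup.
have -> : E = set0 by apply/seteqP; split => x // Ex; apply: ne; exists x.
by rewrite sup0.
Qed.

Lemma le_sup' E c e : (forall e, E e -> e <= c) -> E e -> e <= sup E.
Proof. by move=> H Ee; apply: ub_le_sup => //; exists c => x /H. Qed.

Lemma inf_ge0' E : (forall e, E e -> 0 <= e) -> 0 <= inf E.
Proof.
move=> H.
have [ne|ne] := pselect (E !=set0); first by apply: lb_le_inf.
have -> : E = set0 by apply/seteqP; split => x // Ex; apply: ne; exists x.
by rewrite inf0.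
Qed.

Lemma inf_le' E e : (forall e, E e -> 0 <= e) -> E e -> inf E <= e.
Proof. by move=> H Ee; apply: ge_inf => //; exists 0 => x /H. Qed.

Lemma cabs_ge0 (z : R[i]) : 0 <= cabs z.
Proof. by case: z => a b; rewrite /cabs /= sqrtr_ge0. Qed.

Lemma cabs_le (z : R[i]) : cabs z <= `|complex.Re z| + `|complex.Im z|.
Proof.
case: z => a b; rewrite /cabs /=.
rewrite -[X in _ <= X]ger0_norm ?addr_ge0 // -sqrtr_sqr.
rewrite ler_sqrt ?sqr_ge0 // sqrrD !real_normK ?num_real //.
by rewrite lerD2r lerDl mulrn_wge0 // mulr_ge0.
Qed.

Lemma cabs_sub (a b : R[i]) : cabs (a - b) <= cabs a + cabs b.
Proof.
rewrite /cabs (le_trans (@le_normcD R _ _)) //.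
by rewrite (@normcN R).
Qed.

Lemma cabs0 : cabs (0 : R[i]) = 0.
Proof. exact: ComplexField.Normc.normc0. Qed.

End Gen.

Lemma cont_bnd (R : realType) (X : topologicalType) (g : X -> R) :
  compact [set: X] -> continuous g -> exists M : R, forall x, `|g x| <= M.
Proof.
move=> cX cg.
have cK : compact (g @` setT).
  by apply: continuous_compact => //; exact: continuous_subspaceT.
have := compact_bounded cK.
rewrite /bounded_set /bounded_near => /filter_ex [M HM].
by exists M => x; apply: HM; exists x.
Qed.

Lemma cabs_Re (R : realType) (z : R[i]) : `|complex.Re z| <= cabs z.
Proof.
case: z => a b; rewrite /cabs /= -sqrtr_sqr ler_sqrt ?addr_ge0 ?sqr_ge0 //.
by rewrite lerDl sqr_ge0.
Qed.

Lemma cabs_Im (R : realType) (z : R[i]) : `|complex.Im z| <= cabs z.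
Proof.
case: z => a b; rewrite /cabs /= -sqrtr_sqr ler_sqrt ?addr_ge0 ?sqr_ge0 //.
by rewrite lerDr sqr_ge0.
Qed.

Lemma incr_lt (f : nat -> nat) : {mono f : n m / (n <= m)%N >-> (n <= m)%O} ->
  forall n, (f n < f n.+1)%N.
Proof.
move=> incf n; rewrite ltnNge.
have e : (f n.+1 <= f n)%N = (n.+1 <= n)%N := incf n.+1 n.
by rewrite e ltnn.
Qed.

Lemma incr_ge (f : nat -> nat) : {mono f : n m / (n <= m)%N >-> (n <= m)%O} ->
  forall n, (n <= f n)%N.
Proof.
move=> incf; elim => [//|n IH].
have h := @incr_lt f incf n. exact: (leq_ltn_trans IH h).
Qed.

Lemma bnd_seq (R : realType) (v : nat -> R) : (forall n, `|v n| <= 1) -> bounded_fun v.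
Proof.
move=> H; rewrite /bounded_near; near=> M => n _ /=; apply: le_trans (H n) _.
by near: M; exact: nbhs_pinfty_ge.
Unshelve. all: end_near. Qed.

Lemma incr_mono_lt (f : nat -> nat) : {mono f : n m / (n <= m)%N >-> (n <= m)%O} ->
  forall m m', (m < m')%N -> (f m < f m')%N.
Proof.
move=> incf m m' h; rewrite ltnNge.
have e : (f m' <= f m)%N = (m' <= m)%N := incf m' m.
by rewrite e -ltnNge.
Qed.

Unset Implicit Arguments.
Theorem lemma4p1 (R : realType) (X : topologicalType)
  (A : set (X -> R[i])) (x0 : X) (phi : X -> X)
  (T : (X -> R[i]) -> (X -> R[i])) :
  compact [set: X] -> hausdorff_space X ->
  uniform_algebra A ->
  (forall f, A f -> A (f \o phi)) ->
  (forall f, A f -> T f = f \o phi) ->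
  (fun n : nat =>
     (sup [set gdist A (iter n phi x) x0 | x in [set: X]]) `^ (n%:R^-1))
    @ \oo --> (0 : R) ->
  riesz_op A T.
Proof.
move=> cX _ [Acont [Aconst [Aadd [Amul [Ascal [Aclosed Asep]]]]]] Aphi HT Hcv.
have bnd : forall f, A f -> exists M, forall x, cabs (f x) <= M.
  move=> f /Acont [c1 c2].
  have [M1 H1] := cont_bnd cX c1; have [M2 H2] := cont_bnd cX c2.
  by exists (M1 + M2) => x; exact: le_trans (cabs_le _) (lerD (H1 x) (H2 x)).
have ball_le : forall f, ball1 A f -> forall x, cabs (f x) <= 1.
  move=> f [Af sf] x; have [M HM] := bnd f Af.
  apply: le_trans sf; rewrite /supn.
  by apply: (le_sup' (c:=M)) => [_ [y _ <-]|]; [exact: HM | exists x].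
have ball0 : ball1 A (fun _ => 0).
  split; first exact: Aconst.
  by rewrite /supn; apply: sup_le' => // _ [y _ <-]; rewrite cabs0.
have le2 : forall x y f, ball1 A f -> cabs (f x - f y) <= 2.
  move=> x y f bf; apply: le_trans (cabs_sub _ _) _.
  have := lerD (ball_le f bf x) (ball_le f bf y); lra.
have gd_le : forall x y f, ball1 A f -> cabs (f x - f y) <= gdist A x y.
  move=> x y f bf; rewrite /gdist.
  by apply: (le_sup' (c:=2)) => [_ [g bg <-]|]; [exact: le2 | exists f].
have gd_le2 : forall x y, gdist A x y <= 2.
  by move=> x y; apply: sup_le' => // _ [g bg <-]; exact: le2.
pose Cn n := sup [set gdist A (iter n phi x) x0 | x in [set: X]].
have C_ge : forall n x, gdist A (iter n phi x) x0 <= Cn n.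
  by move=> n x; apply: (le_sup' (c:=2)) => [_ [y _ <-]|]; [exact: gd_le2| exists x].
have iterT : forall n f, A f -> iter n T f = f \o iter n phi /\ A (iter n T f).
  elim => [|n IH] f Af /=; first by split.
  case: (IH f Af) => e Ai; rewrite HT //; split; last exact: Aphi.
  by rewrite e; apply/funext => x /=; rewrite -iterSr.
pose K := fun (f : X -> R[i]) (_ : X) => f x0.
have Kc : compact_op A K.
  split; first by split => [f Af|c f g Af Ag]; [exact: Aconst | by []].
  move=> u bu.
  pose a n := complex.Re (u n x0).
  have [f1 incf1 cv1] := bolzano_weierstrass
    (@bnd_seq R a (fun n => le_trans (cabs_Re _) (ball_le _ (bu n) x0))).
  pose b n := complex.Im (u (f1 n) x0).
  have [f2 incf2 cv2] := bolzano_weierstrass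
    (@bnd_seq R b (fun n => le_trans (cabs_Im _) (ball_le _ (bu (f1 n)) x0))).
  move/cvg_ex: cv1 => [la Hla]; move/cvg_ex: cv2 => [lb Hlb].
  exists (f1 \o f2), (fun _ => Complex la lb); split.
    by move=> n /=; apply: (incr_mono_lt incf1); apply: (incr_lt incf2).
  split; first exact: Aconst.
  move=> e e0.
  have e2 : 0 < e / 2 by rewrite divr_gt0.
  move/cvgrPdist_lt: Hla => /(_ _ e2) [N1 _ H1].
  move/cvgrPdist_lt: Hlb => /(_ _ e2) [N2 _ H2].
  exists (maxn N1 N2) => n hn x /=.
  have h1 := H1 (f2 n) (leq_trans (leq_trans (leq_maxl _ _) hn) (incr_ge incf2 n)).
  have h2 := H2 n (leq_trans (leq_maxr _ _) hn).
  rewrite /a /b /= in h1 h2; rewrite /K.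
  move: h1 h2; case: (u (f1 (f2 n)) x0) => p q /= h1 h2.
  apply: le_lt_trans (cabs_le (Complex (p - la) (q - lb))) _ => /=.
  by have := ltrD h1 h2; rewrite -splitr (distrC la) (distrC lb).
have ess_le : forall n, ess_norm A (iter n T) <= Cn n.
  move=> n; rewrite /ess_norm.
  apply: (le_trans (inf_le' (e := op_norm A (fun f x => iter n T f x - K f x)) _ _)).
  - move=> _ [K' _ <-]; apply: sup_ge0' => _ [f _ <-].
    by apply: sup_ge0' => _ [x _ <-]; exact: cabs_ge0.
  - by exists K.
  rewrite /op_norm; apply: sup_le'.
    by apply: le_trans (C_ge n x0); apply: le_trans (gd_le _ _ _ ball0); rewrite subrr cabs0.
  move=> _ [f bf <-]; rewrite /supn.
  apply: sup_le' => [|_ [x _ <-]].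
    by apply: le_trans (C_ge n x0); apply: le_trans (gd_le _ _ _ ball0); rewrite subrr cabs0.
  case: (iterT n f bf.1) => -> _ /=.
  exact: le_trans (gd_le _ _ _ bf) (C_ge n x).
have ess_ge0 : forall n, 0 <= ess_norm A (iter n T).
  move=> n; apply: inf_ge0' => _ [K' _ <-]; apply: sup_ge0' => _ [f _ <-].
  by apply: sup_ge0' => _ [x _ <-]; exact: cabs_ge0.
apply: (@squeeze_cvgr _ _ _ _ (fun=> 0) (fun n => Cn n `^ n%:R^-1)); last exact: Hcv.
  near=> n; rewrite powR_ge0 /=; apply: ge0_ler_powR;
    rewrite ?invr_ge0 ?nnegrE ?ess_le ?ess_ge0 ?(le_trans (ess_ge0 n) (ess_le n)) //.
exact: cvg_cst.
Unshelve. all: end_near.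
Qed.
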